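(* Let $p,q,s$ be complex numbers with $p\neq0$, $q\neq 0$, $s^2\neq -1$. Let $\tilde A$ be the unital complex algebra generated by $\xi,\eta,\zeta,U,V,Z$ subject to the relations $$\zeta\xi=q^2\xi\zeta,\quad \eta\zeta=q^2\zeta\eta,\quad \xi U=pU\xi,\quad V\xi=p\xi V,\quad \eta V=pV\eta,\quad U\eta=p\eta U,$$ $$UV=VU,\quad U\zeta=\zeta U,\quad V\zeta=\zeta V,$$ $$\xi\eta=(\zeta-1)(\zeta+s^2)+UV,\qquad \eta\xi=(q^2\zeta-1)(q^2\zeta+s^2)+UV,$$ with $Z$ central and $Z^2=UV$. Let $$\tilde e=\frac{1}{2(1+s^2)}\begin{pmatrix}1+s^2+2Z&0&1-s^2-2\zeta&2\xi\\ 0&1+s^2+2Z&-2\eta&s^2-1+2q^2\zeta\\ 1-s^2-2\zeta&2\xi&1+s^2-2Z&0\\ -2\eta&s^2-1+2q^2\zeta&0&1+s^2-2Z\end{pmatrix}\in\mathrm{Mat}_4(\tilde A),$$ and let $\tilde E$ be the projective module defined by $\tilde e$. Then $ch_k(\tilde E)=0$ for all $k=0,1,2,\ldots$.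
   Context: For a projector $e=(e_{ij})\in\mathrm{Mat}_N(A)$ over a unital algebra $A$, the components of its Chern–Connes character are $$ch_n(E)=c_n\sum_{i_1,\dots,i_{2n+1}}\big(e-\tfrac12\mathbf 1\big)_{i_1i_2}\otimes\bar e_{i_2i_3}\otimes\bar e_{i_3i_4}\otimes\cdots\otimes\bar e_{i_{2n+1}i_1}\in A\otimes (A/\mathbb C1)^{\otimes 2n},$$ where $\bar e_{ij}$ denotes the image of $e_{ij}$ in $A/\mathbb C1$ and $c_n$ are nonzero normalisation constants. *)

(* Defs.v *)
From HB Require Import structures.
From mathcomp Require Import all_boot all_order all_algebra.
From mathcomp Require Import reals complex.
Set Implicit Arguments. Unset Strict Implicit. Unset Printing Implicit Defensive.
Import Order.TTheory GRing.Theory Num.Theory.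
Local Open Scope ring_scope.

Section Defs.
Variable R : realType.
Local Notation C := (R[i]).
Variable A : algType C.

Definition tildeA_rels (p q s : C) (xi eta zeta U V Z : A) : Prop :=
  zeta * xi = (q ^+ 2) *: (xi * zeta) /\
  eta * zeta = (q ^+ 2) *: (zeta * eta) /\
  xi * U = p *: (U * xi) /\
  V * xi = p *: (xi * V) /\
  eta * V = p *: (V * eta) /\
  U * eta = p *: (eta * U) /\
  U * V = V * U /\ U * zeta = zeta * U /\ V * zeta = zeta * V /\
  xi * eta = (zeta - 1) * (zeta + (s ^+ 2)%:A) + U * V /\
  eta * xi = ((q ^+ 2) *: zeta - 1) * ((q ^+ 2) *: zeta + (s ^+ 2)%:A) + U * V /\
  Z * xi = xi * Z /\ Z * eta = eta * Z /\ Z * zeta = zeta * Z /\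
  Z * U = U * Z /\ Z * V = V * Z /\
  Z ^+ 2 = U * V.

Definition tilde_e_num (q s : C) (xi eta zeta Z : A) (i j : nat) : A :=
  let a := (1 + s ^+ 2)%:A in
  let b := (1 - s ^+ 2)%:A in
  match i, j with
  | 0, 0 => a + Z *+ 2
  | 0, 2 => b - zeta *+ 2
  | 0, 3 => xi *+ 2
  | 1, 1 => a + Z *+ 2
  | 1, 2 => - (eta *+ 2)
  | 1, 3 => - b + ((q ^+ 2) *: zeta) *+ 2
  | 2, 0 => b - zeta *+ 2
  | 2, 1 => xi *+ 2
  | 2, 2 => a - Z *+ 2
  | 3, 0 => - (eta *+ 2)
  | 3, 1 => - b + ((q ^+ 2) *: zeta) *+ 2
  | 3, 3 => a - Z *+ 2
  | _, _ => 0
  end.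

Definition tilde_e (q s : C) (xi eta zeta Z : A) : 'M[A]_4 :=
  \matrix_(i < 4, j < 4)
    ((2 * (1 + s ^+ 2))^-1 *: tilde_e_num q s xi eta zeta Z i j).

Definition upd m (x : 'I_m -> A) (k : 'I_m) (y : A) : 'I_m -> A :=
  fun j => if j == k then y else x j.

Definition multilinear m (W : lmodType C) (phi : ('I_m -> A) -> W) : Prop :=
  forall (k : 'I_m) (x : 'I_m -> A) (a : C) (u v : A),
    phi (upd x k (a *: u + v)) = a *: phi (upd x k u) + phi (upd x k v).

(* phi factors through A (x) (A/C1)^{(x) m-1}: it kills 1 in every slot but
   the first (hence, by linearity, all of C1 in those slots). *)
Definition kills_scalars_tail m (W : lmodType C) (phi : ('I_m -> A) -> W)
  : Prop :=
  forall (k : 'I_m) (x : 'I_m -> A), (0 < (k : nat))%N -> phi (upd x k 1) = 0.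

(* Image of ch_n(E) under the linear map A (x) (A/C1)^{(x) 2n} -> W induced by
   phi:  c_n sum_{i} phi((e - 1/2)_{i_1 i_2}, e_{i_2 i_3}, ..., e_{i_{2n+1} i_1}). *)
Definition ch_eval (c : nat -> C) (e : 'M[A]_4) (n : nat) (W : lmodType C)
  (phi : ('I_(n.*2.+1) -> A) -> W) : W :=
  let eh := fun i j : 'I_4 => e i j - (if i == j then (2^-1 : C)%:A else 0) in
  c n *: \sum_(i : {ffun 'I_(n.*2.+1) -> 'I_4})
     phi (fun j => (if j == ord0 then eh (i j) (i (ordS j)) else e (i j) (i (ordS j)))).

End Defs.

(* Main.v *)
Require Import Defs.
From HB Require Import structures.
From mathcomp Require Import all_boot all_order all_algebra.
From mathcomp Require Import reals complex.
From Stdlib Require Import FunctionalExtensionality.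
Set Implicit Arguments. Unset Strict Implicit. Unset Printing Implicit Defensive.
Import Order.TTheory GRing.Theory Num.Theory.
Local Open Scope ring_scope.

Section Gen.
Variable R : realType.
Local Notation C := (R[i]).
Variable A : algType C.

Lemma ml_zero m (W : lmodType C) (phi : ('I_m -> A) -> W) :
  multilinear phi -> forall k x, phi (upd x k 0) = 0.
Proof.
move=> H k x; have := H k x 1 0 0.
rewrite scaler0 addr0 scale1r => E.
have E' : phi (upd x k 0) + 0 = phi (upd x k 0) + phi (upd x k 0) by rewrite addr0.
by move/addrI: E' => <-.
Qed.

Lemma ml_scale m (W : lmodType C) (phi : ('I_m -> A) -> W) :
  multilinear phi -> forall k x a u, phi (upd x k (a *: u)) = a *: phi (upd x k u).
Proof.
move=> H k x a u; have := H k x a u 0.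
by rewrite addr0 ml_zero // addr0.
Qed.

Lemma scale_slots m (W : lmodType C) (phi : ('I_m -> A) -> W) :
  multilinear phi -> kills_scalars_tail phi ->
  forall (x y : 'I_m -> A) (a b : 'I_m -> C),
  (forall j : 'I_m, (j : nat) = 0%N -> b j = 0) ->
  (forall j, y j = a j *: x j + b j *: 1) ->
  phi y = (\prod_j a j) *: phi x.
Proof.
move=> Hml Hk x y a b hb hy.
suff H : forall t, (t <= m)%N ->
  phi (fun j : 'I_m => if (j < t)%N then y j else x j) =
  (\prod_(j : 'I_m | (j < t)%N) a j) *: phi x.
  have := H m (leqnn m).
  have -> : (fun j : 'I_m => if (j < m)%N then y j else x j) = y.
    by apply: functional_extensionality => j; rewrite ltn_ord.
  by move=> ->; congr (_ *: _); apply: eq_bigl => j; rewrite ltn_ord.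
elim=> [|t IH] ht.
  have -> : (fun j : 'I_m => if (j < 0)%N then y j else x j) = x.
    by apply: functional_extensionality.
  by rewrite big_pred0 // scale1r.
pose k := Ordinal ht.
have -> : (fun j : 'I_m => if (j < t.+1)%N then y j else x j) =
   upd (fun j : 'I_m => if (j < t)%N then y j else x j) k (y k).
  apply: functional_extensionality => j; rewrite /upd ltnS leq_eqVlt.
  case: eqP => [E|hne].
    have -> : j = k by apply: val_inj; exact: E.
    by rewrite eqxx.
    idtac.
  have -> : (j == k) = false by apply/eqP => E; apply: hne; rewrite E.
  by [].
rewrite hy Hml.
have -> : upd (fun j : 'I_m => if (j < t)%N then y j else x j) k (x k) =
          (fun j : 'I_m => if (j < t)%N then y j else x j).
  apply: functional_extensionality => j; rewrite /upd.
  by case: eqP => // ->; rewrite /= ltnn.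
rewrite ml_scale //.
have -> : b k *: phi (upd (fun j : 'I_m => if (j < t)%N then y j else x j) k 1) = 0.
  case: (posnP t) => [t0|tpos].
    by rewrite (hb k) ?scale0r.
  by rewrite Hk ?scaler0.
rewrite addr0 IH; last by apply: ltnW.
rewrite scalerA [in RHS](bigD1 k) /=; last by rewrite ltnSn.
congr ((_ * _) *: _).
apply: eq_bigl => j.
case: (eqVneq j k) => [->|hne] /=; first by rewrite andbF ltnn.
rewrite andbT ltnS ltn_neqAle.
have -> : ((j : nat) != t) by move: hne; rewrite -val_eqE.
by [].
Qed.

End Gen.
Definition sg_nat n := match n with 0 => 2 | 1 => 3 | 2 => 0 | _ => 1 end%N.
Lemma sg_lt n : (sg_nat n < 4)%N. Proof. by case: n => [|[|[|]]]. Qed.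
Definition sig (i : 'I_4) : 'I_4 := Ordinal (sg_lt i).

Section Main.
Variable R : realType.
Local Notation C := (R[i]).
Variable A : algType C.
Definition eps (i : 'I_4) : C := if (i < 2)%N then 1 else -1.

Lemma aux1 (a z : A) : a - z = -(a + z) + a *+ 2.
Proof. by rewrite mulr2n opprD addrAC addKr. Qed.
Lemma aux2 (a z : A) : a + z = -(a - z) + a *+ 2.
Proof. by rewrite mulr2n opprD opprK addrAC addKr. Qed.

Lemma aux3 (E K h : A) : h + h = 1 -> -E + K - h = -E + h + (K - 1).
Proof. by move=> <-; rewrite opprD !addrA; congr (_ - _); rewrite addrAC addrK. Qed.

Lemma num_sym q s (xi eta zeta Z : A) (i j : 'I_4) :
  tilde_e_num q s xi eta zeta Z (sig i) (sig j) =
  - (eps i * eps j) *: tilde_e_num q s xi eta zeta Z i j +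
  (if i == j then (1 + s ^+ 2) *+ 2 else 0) *: 1.
Proof.
case: i => [[|[|[|[|?]]]] hi] //; case: j => [[|[|[|[|?]]]] hj] //;
  rewrite /eps /= ?mulr1 ?mulrN1 ?mulN1r ?opprK ?scaleN1r ?scale1r ?scale0r ?addr0 ?scaler0 ?oppr0 //.
all: rewrite -scalerMnl; first [exact: aux1 | exact: aux2].
Qed.

Lemma sig_eq (i j : 'I_4) : (sig i == sig j) = (i == j).
Proof. by case: i => [[|[|[|[|?]]]] hi] //; case: j => [[|[|[|[|?]]]] hj]. Qed.
Lemma sigK : involutive sig.
Proof. by case=> [[|[|[|[|?]]]] hi] //; apply: val_inj. Qed.
Lemma eps2 (i : 'I_4) : eps i * eps i = 1.
Proof. by rewrite /eps; case: ifP; rewrite ?mulr1 ?mulrNN ?mulr1. Qed.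

Lemma e_sym q s (xi eta zeta Z : A) (i j : 'I_4) :
  tilde_e q s xi eta zeta Z (sig i) (sig j) =
  - (eps i * eps j) *: tilde_e q s xi eta zeta Z i j +
  (if i == j then (2 * (1 + s ^+ 2))^-1 * ((1 + s ^+ 2) *+ 2) else 0) *: 1.
Proof.
rewrite !mxE num_sym scalerDr !scalerA [_ * - _]mulrC -scalerA.
by case: eqP => _; rewrite ?scale0r ?scaler0 ?scalerA.
Qed.

Lemma eh_sym q s (xi eta zeta Z : A) (i j : 'I_4) :
  let e := tilde_e q s xi eta zeta Z in
  e (sig i) (sig j) - (if sig i == sig j then (2^-1 : C)%:A else 0) =
  - (eps i * eps j) *: (e i j - (if i == j then (2^-1 : C)%:A else 0)) +
  (if i == j then (2 * (1 + s ^+ 2))^-1 * ((1 + s ^+ 2) *+ 2) - 1 else 0) *: 1.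
Proof.
move=> e; rewrite /e e_sym sig_eq; case: eqP => [->|_].
  rewrite eps2 scalerBr scaleN1r scaleN1r opprK scalerBl scale1r.
  apply: aux3; rewrite -scalerDl -mulr2n -(mulr_natr (2^-1 : C) 2) mulVf ?scale1r //.
  by rewrite pnatr_eq0.
by rewrite !subr0 scale0r !addr0.
Qed.
End Main.

Theorem mainTheorem4 (R : realType) (p q s : R[i])
  (hp : p != 0) (hq : q != 0) (hs : s ^+ 2 != -1)
  (A : algType R[i]) (xi eta zeta U V Z : A)
  (hA : tildeA_rels p q s xi eta zeta U V Z)
  (c : nat -> R[i]) (hc : forall n, c n != 0) :
  forall (k : nat) (W : lmodType R[i]) (phi : ('I_(k.*2.+1) -> A) -> W),
    multilinear phi -> kills_scalars_tail phi ->
    ch_eval c (tilde_e q s xi eta zeta Z) phi = 0.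
Proof.
move=> k W phi Hml Hk.
rewrite /ch_eval.
set e := tilde_e q s xi eta zeta Z.
pose eh := fun i j : 'I_4 => e i j - (if i == j then (2^-1 : R[i])%:A else 0).
pose X (f : {ffun 'I_(k.*2.+1) -> 'I_4}) := fun j : 'I_(k.*2.+1) =>
  if j == ord0 then eh (f j) (f (ordS j)) else e (f j) (f (ordS j)).
set S := (\sum_(i : {ffun _ -> 'I_4}) _).
suff -> : S = 0 by rewrite scaler0.
have ES : S = \sum_f phi (X f) by [].
have hs' : 1 + s ^+ 2 != 0 by rewrite addrC addr_eq0.
have hK : (2 * (1 + s ^+ 2))^-1 * ((1 + s ^+ 2) *+ 2) = 1.
  by rewrite -[(1 + s ^+ 2) *+ 2]mulr_natl mulVf // mulf_neq0 // pnatr_eq0.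
pose sigf (f : {ffun 'I_(k.*2.+1) -> 'I_4}) := [ffun j => sig (f j)].
have sigfK : involutive sigf by move=> f; apply/ffunP => j; rewrite !ffunE sigK.
have HS : S = - S.
  rewrite {1}ES (reindex_inj (inv_inj sigfK)) ES -sumrN.
  apply: eq_bigr => f _.
  rewrite (scale_slots Hml Hk (x := X f)
    (a := fun j => -(eps R (f j) * eps R (f (ordS j))))
    (b := fun j => if j == ord0 then (if f j == f (ordS j) then (2 * (1 + s ^+ 2))^-1 * ((1 + s ^+ 2) *+ 2) - 1 else 0)
                   else (if f j == f (ordS j) then (2 * (1 + s ^+ 2))^-1 * ((1 + s ^+ 2) *+ 2) else 0))).
  - rewrite prodrN card_ord big_split /=.
    rewrite -(reindex_inj (@ordS_inj _) (F := fun j => eps R (f j)) (P := xpredT)) /=.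
    rewrite -big_split /=.
    under eq_bigr => j _ do rewrite eps2.
    rewrite big1_eq mulr1 -signr_odd /= odd_double /= expr1.
    by rewrite scaleN1r.
  - move=> j hj; have -> : j == ord0 by apply/eqP/val_inj.
    by rewrite hK subrr; case: ifP.
  - move=> j; rewrite /X !ffunE; case: ifP => _; [exact: eh_sym | exact: e_sym].
move/eqP: HS; rewrite -addr_eq0 -mulr2n -scaler_nat scaler_eq0 pnatr_eq0 /=.
by move/eqP.
Qed.
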